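(* Let $P=\{S_1,\ldots,S_n\}$ be a homothetic square packing with contact graph $G=([n],E)$ whose radii satisfy the weak generic condition. Then there do not exist six distinct vertices $a_1,\ldots,a_6\in[n]$ such that all of the pairs $\{a_1,a_2\},\{a_1,a_4\},\{a_1,a_5\},\{a_2,a_3\},\{a_2,a_4\},\{a_2,a_5\},\{a_2,a_6\},\{a_3,a_5\},\{a_3,a_6\},\{a_4,a_5\},\{a_5,a_6\}$ are edges of $G$.
   Context: Let $S=\{(x,y): -1\le x,y\le 1\}$. A homothetic packing of $n$ squares is a set $P=\{S_1,\ldots,S_n\}$ with $S_i=r_iS+p_i$, $r_i>0$ (radii), $p_i\in\mathbb{R}^2$ (centres), such that distinct squares have disjoint interiors. Its contact graph is $G=([n],E)$ where $\{i,j\}\in E$ iff $i\ne j$ and $S_i\cap S_j\ne\emptyset$. The radii satisfy the weak generic condition if the only function $\sigma:[n]\to\{-1,0,1\}$ with at least $4$ zeroes and $\sum_{i=1}^n\sigma_ir_i=0$ is the zero function. *)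

(* Defs.v *)
From Stdlib Require Import Reals Lra Lia List.
Open Scope R_scope.

(* Square S_i = r_i * S + p_i, with S = [-1,1]^2 and p_i = (cx i, cy i). *)
Definition in_square (r cx cy : nat -> R) (i : nat) (x y : R) : Prop :=
  Rabs (x - cx i) <= r i /\ Rabs (y - cy i) <= r i.

Definition in_interior (r cx cy : nat -> R) (i : nat) (x y : R) : Prop :=
  Rabs (x - cx i) < r i /\ Rabs (y - cy i) < r i.

Definition homothetic_packing (n : nat) (r cx cy : nat -> R) : Prop :=
  (forall i, (i < n)%nat -> 0 < r i) /\
  (forall i j, (i < n)%nat -> (j < n)%nat -> i <> j ->
     ~ (exists x y, in_interior r cx cy i x y /\ in_interior r cx cy j x y)).

Definition contact_edge (n : nat) (r cx cy : nat -> R) (i j : nat) : Prop :=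
  (i < n)%nat /\ (j < n)%nat /\ i <> j /\
  exists x y, in_square r cx cy i x y /\ in_square r cx cy j x y.

Definition num_zeroes (n : nat) (sigma : nat -> Z) : nat :=
  length (filter (fun i => Z.eqb (sigma i) 0%Z) (seq 0 n)).

Definition weak_generic (n : nat) (r : nat -> R) : Prop :=
  forall sigma : nat -> Z,
    (forall i, (i < n)%nat -> sigma i = (-1)%Z \/ sigma i = 0%Z \/ sigma i = 1%Z) ->
    (4 <= num_zeroes n sigma)%nat ->
    fold_right Rplus 0 (map (fun i => IZR (sigma i) * r i) (seq 0 n)) = 0 ->
    forall i, (i < n)%nat -> sigma i = 0%Z.

(* Main.v *)
Require Import Defs.
From Stdlib Require Import Reals Lra Lia List.
Open Scope R_scope.

Lemma abs_le_iff x a : Rabs x <= a <-> -a <= x <= a.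
Proof. unfold Rabs; destruct (Rcase_abs x); split; intros; lra. Qed.
Lemma abs_lt_iff x a : Rabs x < a <-> -a < x < a.
Proof. unfold Rabs; destruct (Rcase_abs x); split; intros; lra. Qed.

Definition sg (s : bool) (d : R) : R := if s then d else - d.

Definition gap (u c r : R) : R :=
  Rmin (if Rlt_dec u (c + r) then c + r - u else 2*r)
       (if Rlt_dec (c - r) u then u - (c - r) else 2*r).

Lemma gap_pos u c r : 0 < r -> Rabs (u - c) <= r -> 0 < gap u c r.
Proof.
  intros Hr Hu; apply abs_le_iff in Hu; unfold gap.
  apply Rmin_glb_lt; destruct Rlt_dec; lra.
Qed.

Lemma gap_l u c r : gap u c r <= (if Rlt_dec u (c + r) then c + r - u else 2*r).
Proof. apply Rmin_l. Qed.
Lemma gap_r u c r : gap u c r <= (if Rlt_dec (c - r) u then u - (c - r) else 2*r).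
Proof. apply Rmin_r. Qed.

Lemma dir_exists u c r d : 0 < r -> Rabs (u - c) <= r -> 0 < d -> d < gap u c r ->
  exists s, Rabs (u + sg s d - c) < r.
Proof.
  intros Hr Hu Hd Hg; pose proof (gap_l u c r); pose proof (gap_r u c r).
  apply abs_le_iff in Hu.
  destruct (Rlt_dec u (c + r)).
  - exists true; simpl; apply abs_lt_iff; lra.
  - exists false; simpl; apply abs_lt_iff.
    destruct (Rlt_dec (c - r) u); lra.
Qed.

Lemma dir_both u c r d : 0 < r -> Rabs (u - c) <= r -> u <> c - r -> u <> c + r ->
  0 < d -> d < gap u c r -> forall s, Rabs (u + sg s d - c) < r.
Proof.
  intros Hr Hu H1 H2 Hd Hg s; pose proof (gap_l u c r); pose proof (gap_r u c r).
  apply abs_le_iff in Hu.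
  assert (u < c + r) by (destruct (Req_dec u (c+r)); [contradiction|lra]).
  assert (c - r < u) by (destruct (Req_dec u (c-r)); [contradiction|lra]).
  destruct (Rlt_dec u (c + r)); [|lra].
  destruct (Rlt_dec (c - r) u); [|lra].
  destruct s; simpl; apply abs_lt_iff; lra.
Qed.

Lemma pigeon5 (a b c d e : bool * bool) :
  a = b \/ a = c \/ a = d \/ a = e \/ b = c \/ b = d \/ b = e \/ c = d \/ c = e \/ d = e.
Proof.
  destruct a as [[|][|]], b as [[|][|]], c as [[|][|]], d as [[|][|]], e as [[|][|]];
  auto 11.
Qed.

Lemma exists_small (l : list R) : (forall x, In x l -> 0 < x) ->
  exists d, 0 < d /\ forall x, In x l -> d < x.
Proof.
  induction l as [|a l IH]; intros H.
  - exists 1; split; [lra| intros x []].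
  - destruct IH as [d [Hd Hl]]; [intros; apply H; simpl; auto|].
    assert (0 < a) by (apply H; simpl; auto).
    exists (Rmin a d / 2); split.
    + assert (0 < Rmin a d) by (apply Rmin_glb_lt; lra). lra.
    + intros x [<-|Hx]; pose proof (Rmin_l a d); pose proof (Rmin_r a d).
      * assert (0 < Rmin a d) by (apply Rmin_glb_lt; lra). lra.
      * pose proof (Hl x Hx). assert (0 < Rmin a d) by (apply Rmin_glb_lt; lra). lra.
Qed.

Section Geo.
Variables (n : nat) (r cx cy : nat -> R).
Hypothesis HP : homothetic_packing n r cx cy.

Lemma clash i j x y : (i < n)%nat -> (j < n)%nat -> i <> j ->
  in_interior r cx cy i x y -> in_interior r cx cy j x y -> False.
Proof.
  intros Hi Hj Hij H1 H2. destruct HP as [_ HP2].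
  apply (HP2 i j Hi Hj Hij). exists x, y; auto.
Qed.

Lemma rpos i : (i < n)%nat -> 0 < r i.
Proof. destruct HP as [H _]; auto. Qed.

Lemma sq_dir i px py d : (i < n)%nat -> in_square r cx cy i px py -> 0 < d ->
  d < gap px (cx i) (r i) -> d < gap py (cy i) (r i) ->
  exists s t, in_interior r cx cy i (px + sg s d) (py + sg t d).
Proof.
  intros Hi [Hx Hy] Hd G1 G2. pose proof (rpos i Hi).
  destruct (dir_exists _ _ _ _ H Hx Hd G1) as [s Hs].
  destruct (dir_exists _ _ _ _ H Hy Hd G2) as [t Ht].
  exists s, t; split; auto.
Qed.

Lemma gaps_pos i px py : (i < n)%nat -> in_square r cx cy i px py ->
  0 < gap px (cx i) (r i) /\ 0 < gap py (cy i) (r i).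
Proof.
  intros Hi [Hx Hy]; pose proof (rpos i Hi); split; apply gap_pos; auto.
Qed.

Lemma corner_x i j k l px py :
  NoDup (i :: j :: k :: l :: nil) ->
  (i < n)%nat -> (j < n)%nat -> (k < n)%nat -> (l < n)%nat ->
  in_square r cx cy i px py -> in_square r cx cy j px py ->
  in_square r cx cy k px py -> in_square r cx cy l px py ->
  px = cx i - r i \/ px = cx i + r i.
Proof.
  intros ND Hi Hj Hk Hl Si Sj Sk Sl.
  destruct (Req_dec px (cx i - r i)) as [E|E1]; [auto|].
  destruct (Req_dec px (cx i + r i)) as [E|E2]; [auto|].
  exfalso.
  repeat rewrite NoDup_cons_iff in ND; simpl in ND.
  assert (i <> j /\ i <> k /\ i <> l /\ j <> k /\ j <> l /\ k <> l) as (Dij&Dik&Dil&Djk&Djl&Dkl) by lia.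
  destruct (gaps_pos i px py Hi Si) as [gi1 gi2].
  destruct (gaps_pos j px py Hj Sj) as [gj1 gj2].
  destruct (gaps_pos k px py Hk Sk) as [gk1 gk2].
  destruct (gaps_pos l px py Hl Sl) as [gl1 gl2].
  destruct (exists_small (gap px (cx i) (r i) :: gap py (cy i) (r i) ::
     gap px (cx j) (r j) :: gap py (cy j) (r j) ::
     gap px (cx k) (r k) :: gap py (cy k) (r k) ::
     gap px (cx l) (r l) :: gap py (cy l) (r l) :: nil)) as [d [Hd Hs]].
  { simpl; intros x Hx; repeat destruct Hx as [<-|Hx]; auto; contradiction. }
  destruct (sq_dir i px py d Hi Si Hd) as [si [ti Ii]]; try (apply Hs; simpl; tauto).
  destruct (sq_dir j px py d Hj Sj Hd) as [sj [tj Ij]]; try (apply Hs; simpl; tauto).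
  destruct (sq_dir k px py d Hk Sk Hd) as [sk [tk Ik]]; try (apply Hs; simpl; tauto).
  destruct (sq_dir l px py d Hl Sl Hd) as [sl [tl Il]]; try (apply Hs; simpl; tauto).
  assert (Hb : forall s, in_interior r cx cy i (px + sg s d) (py + sg ti d)).
  { intros s; split; [|apply Ii]. destruct Si as [Si _].
    apply dir_both; auto. apply rpos; auto. apply Hs; simpl; tauto. }
  destruct (pigeon5 (true, ti) (false, ti) (sj, tj) (sk, tk) (sl, tl))
    as [H|[H|[H|[H|[H|[H|[H|[H|[H|H]]]]]]]]]; try discriminate;
  injection H as <- <-.
  - exact (clash i j _ _ Hi Hj Dij (Hb true) Ij).
  - exact (clash i k _ _ Hi Hk Dik (Hb true) Ik).
  - exact (clash i l _ _ Hi Hl Dil (Hb true) Il).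
  - exact (clash i j _ _ Hi Hj Dij (Hb false) Ij).
  - exact (clash i k _ _ Hi Hk Dik (Hb false) Ik).
  - exact (clash i l _ _ Hi Hl Dil (Hb false) Il).
  - exact (clash j k _ _ Hj Hk Djk Ij Ik).
  - exact (clash j l _ _ Hj Hl Djl Ij Il).
  - exact (clash k l _ _ Hk Hl Dkl Ik Il).
Qed.

Lemma no5 i j k l m px py :
  NoDup (i :: j :: k :: l :: m :: nil) ->
  (i < n)%nat -> (j < n)%nat -> (k < n)%nat -> (l < n)%nat -> (m < n)%nat ->
  in_square r cx cy i px py -> in_square r cx cy j px py ->
  in_square r cx cy k px py -> in_square r cx cy l px py ->
  in_square r cx cy m px py -> False.
Proof.
  intros ND Hi Hj Hk Hl Hm Si Sj Sk Sl Sm.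
  repeat rewrite NoDup_cons_iff in ND; simpl in ND.
  assert (i <> j /\ i <> k /\ i <> l /\ i <> m /\ j <> k /\ j <> l /\ j <> m /\ k <> l /\ k <> m /\ l <> m)
    as (Dij&Dik&Dil&Dim&Djk&Djl&Djm&Dkl&Dkm&Dlm) by lia.
  destruct (gaps_pos i px py Hi Si) as [gi1 gi2].
  destruct (gaps_pos j px py Hj Sj) as [gj1 gj2].
  destruct (gaps_pos k px py Hk Sk) as [gk1 gk2].
  destruct (gaps_pos l px py Hl Sl) as [gl1 gl2].
  destruct (gaps_pos m px py Hm Sm) as [gm1 gm2].
  destruct (exists_small (gap px (cx i) (r i) :: gap py (cy i) (r i) ::
     gap px (cx j) (r j) :: gap py (cy j) (r j) ::
     gap px (cx k) (r k) :: gap py (cy k) (r k) ::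
     gap px (cx l) (r l) :: gap py (cy l) (r l) ::
     gap px (cx m) (r m) :: gap py (cy m) (r m) :: nil)) as [d [Hd Hs]].
  { simpl; intros x Hx; repeat destruct Hx as [<-|Hx]; auto; contradiction. }
  destruct (sq_dir i px py d Hi Si Hd) as [si [ti Ii]]; try (apply Hs; simpl; tauto).
  destruct (sq_dir j px py d Hj Sj Hd) as [sj [tj Ij]]; try (apply Hs; simpl; tauto).
  destruct (sq_dir k px py d Hk Sk Hd) as [sk [tk Ik]]; try (apply Hs; simpl; tauto).
  destruct (sq_dir l px py d Hl Sl Hd) as [sl [tl Il]]; try (apply Hs; simpl; tauto).
  destruct (sq_dir m px py d Hm Sm Hd) as [sm [tm Im]]; try (apply Hs; simpl; tauto).
  destruct (pigeon5 (si, ti) (sj, tj) (sk, tk) (sl, tl) (sm, tm))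
    as [H|[H|[H|[H|[H|[H|[H|[H|[H|H]]]]]]]]];
  injection H as <- <-; first [ exact (clash i j _ _ Hi Hj Dij Ii Ij) | exact (clash i k _ _ Hi Hk Dik Ii Ik) | exact (clash i l _ _ Hi Hl Dil Ii Il) | exact (clash i m _ _ Hi Hm Dim Ii Im) | exact (clash j k _ _ Hj Hk Djk Ij Ik) | exact (clash j l _ _ Hj Hl Djl Ij Il) | exact (clash j m _ _ Hj Hm Djm Ij Im) | exact (clash k l _ _ Hk Hl Dkl Ik Il) | exact (clash k m _ _ Hk Hm Dkm Ik Im) | exact (clash l m _ _ Hl Hm Dlm Il Im) ].
Qed.

End Geo.

Lemma swap_pack n r cx cy : homothetic_packing n r cx cy -> homothetic_packing n r cy cx.
Proof.
  intros [H1 H2]; split; auto.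
  intros i j Hi Hj Hij [x [y [[A B] [C D]]]].
  apply (H2 i j Hi Hj Hij). exists y, x; split; split; auto.
Qed.

Lemma corner_y n r cx cy i j k l px py :
  homothetic_packing n r cx cy ->
  NoDup (i :: j :: k :: l :: nil) ->
  (i < n)%nat -> (j < n)%nat -> (k < n)%nat -> (l < n)%nat ->
  in_square r cx cy i px py -> in_square r cx cy j px py ->
  in_square r cx cy k px py -> in_square r cx cy l px py ->
  py = cy i - r i \/ py = cy i + r i.
Proof.
  intros HP ND Hi Hj Hk Hl [A1 A2] [B1 B2] [C1 C2] [D1 D2].
  apply (corner_x n r cy cx (swap_pack _ _ _ _ HP) i j k l py px); auto; split; auto.
Qed.

Lemma contact_bounds n r cx cy i j : contact_edge n r cx cy i j ->
  Rabs (cx i - cx j) <= r i + r j /\ Rabs (cy i - cy j) <= r i + r j.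
Proof.
  intros (_&_&_&x&y&[A B]&[C D]).
  apply abs_le_iff in A; apply abs_le_iff in B; apply abs_le_iff in C; apply abs_le_iff in D.
  split; apply abs_le_iff; lra.
Qed.

Lemma helly4 c1 c2 c3 c4 r1 r2 r3 r4 :
  Rabs (c1 - c2) <= r1 + r2 -> Rabs (c1 - c3) <= r1 + r3 -> Rabs (c1 - c4) <= r1 + r4 ->
  Rabs (c2 - c3) <= r2 + r3 -> Rabs (c2 - c4) <= r2 + r4 -> Rabs (c3 - c4) <= r3 + r4 ->
  0 < r1 -> 0 < r2 -> 0 < r3 -> 0 < r4 ->
  let p := Rmax (Rmax (c1 - r1) (c2 - r2)) (Rmax (c3 - r3) (c4 - r4)) in
  Rabs (p - c1) <= r1 /\ Rabs (p - c2) <= r2 /\ Rabs (p - c3) <= r3 /\ Rabs (p - c4) <= r4.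
Proof.
  intros A B C D E F P1 P2 P3 P4 p.
  apply abs_le_iff in A; apply abs_le_iff in B; apply abs_le_iff in C;
  apply abs_le_iff in D; apply abs_le_iff in E; apply abs_le_iff in F.
  unfold p, Rmax; repeat destruct Rle_dec; repeat split; apply abs_le_iff; lra.
Qed.

Definition sig (a b i : nat) : Z :=
  if Nat.eqb i a then 1%Z else if Nat.eqb i b then (-1)%Z else 0%Z.

Lemma existsb_notin a l : ~ In a l -> existsb (Nat.eqb a) l = false.
Proof.
  intros H; destruct (existsb (Nat.eqb a) l) eqn:E; auto.
  apply existsb_exists in E as [y [Hy Ey]]. apply Nat.eqb_eq in Ey; subst; tauto.
Qed.

Lemma existsb_in a l : In a l -> existsb (Nat.eqb a) l = true.
Proof.
  intros H; apply existsb_exists; exists a; split; auto; apply Nat.eqb_refl.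
Qed.

Lemma sum_sig (r : nat -> R) a b l : NoDup l -> a <> b ->
  fold_right Rplus 0 (map (fun i => IZR (sig a b i) * r i) l) =
  (if existsb (Nat.eqb a) l then r a else 0) - (if existsb (Nat.eqb b) l then r b else 0).
Proof.
  intros ND Hab; induction ND as [|x l Hx ND IH]; simpl; [lra|].
  rewrite IH; unfold sig.
  destruct (Nat.eqb_spec x a); destruct (Nat.eqb_spec x b); subst; try congruence.
  - rewrite (existsb_notin a l Hx), Nat.eqb_refl.
    destruct (Nat.eqb_spec b a); [congruence|]. simpl. lra.
  - rewrite (existsb_notin b l Hx), Nat.eqb_refl.
    destruct (Nat.eqb_spec a b); [congruence|]. simpl. lra.
  - destruct (Nat.eqb_spec a x); [congruence|]. destruct (Nat.eqb_spec b x); [congruence|].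
    simpl. lra.
Qed.

Ltac tauto_ineq := match goal with H : ~ (_ \/ _) |- _ => exfalso; apply H; clear H; tauto_disj end
with tauto_disj := first [ left; reflexivity | right; tauto_disj ].

Ltac ndtac := repeat constructor; simpl; let H := fresh in intro H; repeat destruct H as [H|H]; try contradiction; congruence.

Lemma lt_in_seq x n : (x < n)%nat -> In x (seq 0 n).
Proof. intros; apply in_seq; lia. Qed.

Theorem lemma18 (n : nat) (r cx cy : nat -> R) :
  homothetic_packing n r cx cy ->
  weak_generic n r ->
  ~ (exists a1 a2 a3 a4 a5 a6 : nat,
       NoDup (a1 :: a2 :: a3 :: a4 :: a5 :: a6 :: nil) /\
       (a1 < n)%nat /\ (a2 < n)%nat /\ (a3 < n)%nat /\
       (a4 < n)%nat /\ (a5 < n)%nat /\ (a6 < n)%nat /\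
       contact_edge n r cx cy a1 a2 /\ contact_edge n r cx cy a1 a4 /\
       contact_edge n r cx cy a1 a5 /\ contact_edge n r cx cy a2 a3 /\
       contact_edge n r cx cy a2 a4 /\ contact_edge n r cx cy a2 a5 /\
       contact_edge n r cx cy a2 a6 /\ contact_edge n r cx cy a3 a5 /\
       contact_edge n r cx cy a3 a6 /\ contact_edge n r cx cy a4 a5 /\
       contact_edge n r cx cy a5 a6).
Proof.
  intros HP HW (a1&a2&a3&a4&a5&a6&ND&H1&H2&H3&H4&H5&H6&E12&E14&E15&E23&E24&E25&E26&E35&E36&E45&E56).
  assert (ND' := ND).
  repeat rewrite NoDup_cons_iff in ND'; simpl in ND'.
  destruct ND' as (n1&n2&n3&n4&n5&_).
  assert (a1 <> a2 /\ a1 <> a3 /\ a1 <> a4 /\ a1 <> a5 /\ a1 <> a6 /\ a2 <> a3 /\ a2 <> a4 /\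
          a2 <> a5 /\ a2 <> a6 /\ a3 <> a4 /\ a3 <> a5 /\ a3 <> a6 /\ a4 <> a5 /\ a4 <> a6 /\ a5 <> a6)
    as (D12&D13&D14&D15&D16&D23&D24&D25&D26&D34&D35&D36&D45&D46&D56)
    by (repeat split; intro E; subst; tauto_ineq).
  clear n1 n2 n3 n4 n5.
  pose proof (rpos n r cx cy HP a1 H1) as P1.
  pose proof (rpos n r cx cy HP a2 H2) as P2.
  pose proof (rpos n r cx cy HP a3 H3) as P3.
  pose proof (rpos n r cx cy HP a4 H4) as P4.
  pose proof (rpos n r cx cy HP a5 H5) as P5.
  pose proof (rpos n r cx cy HP a6 H6) as P6.
  apply contact_bounds in E12 as [X12 Y12]. apply contact_bounds in E14 as [X14 Y14].
  apply contact_bounds in E15 as [X15 Y15]. apply contact_bounds in E23 as [X23 Y23].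
  apply contact_bounds in E24 as [X24 Y24]. apply contact_bounds in E25 as [X25 Y25].
  apply contact_bounds in E26 as [X26 Y26]. apply contact_bounds in E35 as [X35 Y35].
  apply contact_bounds in E36 as [X36 Y36]. apply contact_bounds in E45 as [X45 Y45].
  apply contact_bounds in E56 as [X56 Y56].
  destruct (helly4 _ _ _ _ _ _ _ _ X12 X14 X15 X24 X25 X45 P1 P2 P4 P5) as (Ax1&Ax2&Ax4&Ax5).
  destruct (helly4 _ _ _ _ _ _ _ _ Y12 Y14 Y15 Y24 Y25 Y45 P1 P2 P4 P5) as (Ay1&Ay2&Ay4&Ay5).
  destruct (helly4 _ _ _ _ _ _ _ _ X23 X25 X26 X35 X36 X56 P2 P3 P5 P6) as (Bx2&Bx3&Bx5&Bx6).
  destruct (helly4 _ _ _ _ _ _ _ _ Y23 Y25 Y26 Y35 Y36 Y56 P2 P3 P5 P6) as (By2&By3&By5&By6).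
  set (px := Rmax (Rmax (cx a1 - r a1) (cx a2 - r a2)) (Rmax (cx a4 - r a4) (cx a5 - r a5))) in *.
  set (py := Rmax (Rmax (cy a1 - r a1) (cy a2 - r a2)) (Rmax (cy a4 - r a4) (cy a5 - r a5))) in *.
  set (qx := Rmax (Rmax (cx a2 - r a2) (cx a3 - r a3)) (Rmax (cx a5 - r a5) (cx a6 - r a6))) in *.
  set (qy := Rmax (Rmax (cy a2 - r a2) (cy a3 - r a3)) (Rmax (cy a5 - r a5) (cy a6 - r a6))) in *.
  assert (S1 : in_square r cx cy a1 px py) by (split; auto).
  assert (S2 : in_square r cx cy a2 px py) by (split; auto).
  assert (S4 : in_square r cx cy a4 px py) by (split; auto).
  assert (S5 : in_square r cx cy a5 px py) by (split; auto).
  assert (T2 : in_square r cx cy a2 qx qy) by (split; auto).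
  assert (T3 : in_square r cx cy a3 qx qy) by (split; auto).
  assert (T5 : in_square r cx cy a5 qx qy) by (split; auto).
  assert (T6 : in_square r cx cy a6 qx qy) by (split; auto).
  assert (N1 : NoDup (a2 :: a1 :: a4 :: a5 :: nil)) by ndtac.
  assert (N2 : NoDup (a5 :: a1 :: a2 :: a4 :: nil)) by ndtac.
  assert (N3 : NoDup (a2 :: a3 :: a5 :: a6 :: nil)) by ndtac.
  assert (N4 : NoDup (a5 :: a2 :: a3 :: a6 :: nil)) by ndtac.
  pose proof (corner_x n r cx cy HP _ _ _ _ _ _ N1 H2 H1 H4 H5 S2 S1 S4 S5) as C1.
  pose proof (corner_y n r cx cy _ _ _ _ _ _ HP N1 H2 H1 H4 H5 S2 S1 S4 S5) as C2.
  pose proof (corner_x n r cx cy HP _ _ _ _ _ _ N2 H5 H1 H2 H4 S5 S1 S2 S4) as C3.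
  pose proof (corner_y n r cx cy _ _ _ _ _ _ HP N2 H5 H1 H2 H4 S5 S1 S2 S4) as C4.
  pose proof (corner_x n r cx cy HP _ _ _ _ _ _ N3 H2 H3 H5 H6 T2 T3 T5 T6) as C5.
  pose proof (corner_y n r cx cy _ _ _ _ _ _ HP N3 H2 H3 H5 H6 T2 T3 T5 T6) as C6.
  pose proof (corner_x n r cx cy HP _ _ _ _ _ _ N4 H5 H2 H3 H6 T5 T2 T3 T6) as C7.
  pose proof (corner_y n r cx cy _ _ _ _ _ _ HP N4 H5 H2 H3 H6 T5 T2 T3 T6) as C8.
  assert (Req : r a2 = r a5).
  { destruct (Req_dec px qx) as [Ex|Ex]; [destruct (Req_dec py qy) as [Ey|Ey]|].
    - exfalso.
      assert (S3 : in_square r cx cy a3 px py) by (rewrite Ex, Ey; exact T3).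
      assert (N5 : NoDup (a1 :: a2 :: a3 :: a4 :: a5 :: nil)) by ndtac.
      exact (no5 n r cx cy HP _ _ _ _ _ _ _ N5 H1 H2 H3 H4 H5 S1 S2 S3 S4 S5).
    - destruct C2, C4, C6, C8; first [lra | exfalso; apply Ey; lra].
    - destruct C1, C3, C5, C7; first [lra | exfalso; apply Ex; lra]. }
  assert (Z : sig a2 a5 a2 = 0%Z).
  { refine (HW (sig a2 a5) _ _ _ a2 H2).
    - intros i _; unfold sig; destruct (Nat.eqb i a2); [|destruct (Nat.eqb i a5)]; auto.
    - unfold num_zeroes.
      change 4%nat with (length (a1 :: a3 :: a4 :: a6 :: nil)).
      apply NoDup_incl_length; [ndtac|].
      intros x Hx; apply filter_In; simpl in Hx.
      repeat destruct Hx as [<-|Hx]; try contradiction; split; try (apply lt_in_seq; assumption);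
      unfold sig; match goal with |- Z.eqb (if Nat.eqb ?y a2 then _ else _) _ = true =>
        destruct (Nat.eqb_spec y a2); try congruence; destruct (Nat.eqb_spec y a5); try congruence; reflexivity end.
    - rewrite sum_sig; auto; [|apply seq_NoDup].
      rewrite !existsb_in by (apply lt_in_seq; assumption). lra. }
  unfold sig in Z; rewrite Nat.eqb_refl in Z; discriminate.
Qed.
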